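(* Let $\varepsilon=(\varepsilon_n)_{n\in\mathbb{Z}}$ be i.i.d. with $\mathbb{P}(\varepsilon_n=1)=\mathbb{P}(\varepsilon_n=-1)=1/2$, let $a_0,a_1\in\mathbb{R}$, and let $\omega_n=a_0\varepsilon_n+a_1\varepsilon_{n-1}$. Write $\omega_n=f(X_n)$ with $X_n=(\varepsilon_{n-1},\varepsilon_n)$, a Markov chain on $\Sigma=\{-1,+1\}^2$ started at its invariant (uniform) distribution, and $f(x_0,x_1)=a_0x_1+a_1x_0$. Then the Perron–Frobenius eigenvalue of the matrix $A(0,\beta,0)=\sum_{t\ge1}M(t,\beta,0)$ is $$\lambda(\beta)=\cosh(a_0\beta)\cosh(a_1\beta)\left(1+K(1)\left(\frac{\cosh((a_0+a_1)\beta)}{\cosh(a_0\beta)\cosh(a_1\beta)}-1\right)\right),$$ so that the annealed critical point of the pinning model with this disorder is $h_c^a(\beta)=-\log\lambda(\beta)$.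
   Context: $K(n)$, $n\ge1$, is a probability distribution on $\{1,2,\dots\}$ with $K(n)>0$ for all $n$ (the interarrival law of a recurrent renewal process $\tau$ with $\tau_0=0$). For a Markov chain with transition matrix $Q$ on finite $\Sigma$ and $f:\Sigma\to\mathbb{R}$, $M(t,\beta,h)(x,y)=K(t)Q^t(x,y)e^{\beta f(y)+h}$. The annealed critical point is $h_c^a(\beta)=\sup\{h: \lim_N \frac1N\log\mathbb{E}Z_{N,\beta,h,\omega}=0\}$, where $Z_{N,\beta,h,\omega}=E\big[\exp\big(\sum_{n=1}^N(\beta\omega_n+h)\mathbf 1_{\{n\in\tau\}}\big)\mathbf 1_{\{N\in\tau\}}\big]$ and $\mathbb{E}$ averages over $\omega$. *)

(* Defs.v *)
From Stdlib Require Import Reals Lra Lia Arith List.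
Open Scope R_scope.

(* State space Sigma = {-1,+1}^2, encoded as bool*bool; a state
   x = (x0, x1) stands for (eps_{n-1}, eps_n). *)
Definition sgn (b : bool) : R := if b then 1 else -1.
Definition Sigma := (bool * bool)%type.

Definition sumS (g : Sigma -> R) : R :=
  g (false, false) + g (false, true) + g (true, false) + g (true, true).

Definition mat := Sigma -> Sigma -> R.
Definition mmul (A B : mat) : mat := fun x y => sumS (fun z => A x z * B z y).
Definition mvec (A : mat) (v : Sigma -> R) : Sigma -> R :=
  fun x => sumS (fun y => A x y * v y).
Definition idm : mat := fun x y => if (Bool.eqb (fst x) (fst y) && Bool.eqb (snd x) (snd y))%bool then 1 else 0.
Fixpoint mpow (A : mat) (t : nat) : mat :=
  match t with O => idm | S t' => mmul (mpow A t') A end.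

(* Transition matrix of X_n = (eps_{n-1}, eps_n): (x0,x1) -> (x1, +-1) w.p. 1/2. *)
Definition Q : mat := fun x y => if Bool.eqb (fst y) (snd x) then 1/2 else 0.

Definition fobs (a0 a1 : R) (x : Sigma) : R := a0 * sgn (snd x) + a1 * sgn (fst x).

Definition Mmat (K : nat -> R) (a0 a1 : R) (t : nat) (beta h : R) : mat :=
  fun x y => K t * mpow Q t x y * exp (beta * fobs a0 a1 y + h).

Definition is_A0 (K : nat -> R) (a0 a1 beta : R) (A : mat) : Prop :=
  forall x y, infinite_sum (fun n => Mmat K a0 a1 (S n) beta 0 x y) (A x y).

(* Perron-Frobenius eigenvalue: lam is an eigenvalue with a strictly positive
   eigenvector, and lam is the spectral radius: every complex eigenvalue
   mu = a + i b (eigenvector u + i w <> 0) satisfies |mu| <= lam. *)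
Definition PF_eigenvalue (A : mat) (lam : R) : Prop :=
  0 <= lam /\
  (exists v : Sigma -> R, (forall x, 0 < v x) /\ forall x, mvec A v x = lam * v x) /\
  (forall (a b : R) (u w : Sigma -> R),
      (exists x, u x <> 0 \/ w x <> 0) ->
      (forall x, mvec A u x = a * u x - b * w x) ->
      (forall x, mvec A w x = b * u x + a * w x) ->
      a ^ 2 + b ^ 2 <= lam ^ 2).

Fixpoint rsum (n : nat) (g : nat -> R) : R :=
  match n with O => 0 | S m => rsum m g + g m end.

(* Partition function for a fixed environment w (w n = omega_n):
   Z_N = E[exp(sum_{n=1}^N (beta w_n + h) 1_{n in tau}) 1_{N in tau}],
   computed by decomposing on the last renewal before N (tau_0 = 0):
   Z_0 = 1,  Z_N = sum_{t=1}^N Z_{N-t} K(t) e^{beta w_N + h}.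
   The first argument is fuel (>= N suffices). *)
Fixpoint Zfuel (K : nat -> R) (w : nat -> R) (beta h : R) (fuel N : nat) : R :=
  match N with
  | O => 1
  | S _ =>
    match fuel with
    | O => 0
    | S f => rsum N (fun i => Zfuel K w beta h f (N - S i) * K (S i)
                              * exp (beta * w N + h))
    end
  end.
Definition Zpart (K : nat -> R) (w : nat -> R) (beta h : R) (N : nat) : R :=
  Zfuel K w beta h N N.

(* Averaging over eps_0, ..., eps_{n-1} i.i.d. uniform on {-1,+1}
   (the remaining coordinates are set to 0 and never used). *)
Definition upd (e : nat -> R) (k : nat) (v : R) : nat -> R :=
  fun j => if Nat.eqb j k then v else e j.
Fixpoint eps_avg (n : nat) (F : (nat -> R) -> R) : R :=
  match n with
  | O => F (fun _ => 0)
  | S m => (eps_avg m (fun e => F (upd e m 1)) + eps_avg m (fun e => F (upd e m (-1)))) / 2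
  end.

(* omega_n = a0 eps_n + a1 eps_{n-1}  (only used for n >= 1) *)
Definition omega (a0 a1 : R) (e : nat -> R) (n : nat) : R := a0 * e n + a1 * e (pred n).

(* Annealed partition function E Z_{N,beta,h,omega}: Z_N depends on eps_0..eps_N. *)
Definition EZ (K : nat -> R) (a0 a1 beta h : R) (N : nat) : R :=
  eps_avg (S N) (fun e => Zpart K (omega a0 a1 e) beta h N).

Definition annealed_fe_zero (K : nat -> R) (a0 a1 beta h : R) : Prop :=
  Un_cv (fun n => ln (EZ K a0 a1 beta h (S n)) / INR (S n)) 0.

Definition is_hca (K : nat -> R) (a0 a1 beta hc : R) : Prop :=
  is_lub (fun h => annealed_fe_zero K a0 a1 beta h) hc.

Definition lambda_formula (K : nat -> R) (a0 a1 beta : R) : R :=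
  cosh (a0 * beta) * cosh (a1 * beta) *
  (1 + K 1%nat * (cosh ((a0 + a1) * beta) / (cosh (a0 * beta) * cosh (a1 * beta)) - 1)).

(* Main.v *)
Require Import Defs.
From Stdlib Require Import Reals Lra Lia Arith Classical FunctionalExtensionality.
Open Scope R_scope.


Lemma rsum_ext n f g : (forall i, (i < n)%nat -> f i = g i) -> rsum n f = rsum n g.
Proof. induction n; simpl; intros H; [reflexivity|]. rewrite IHn by (intros; apply H; lia). rewrite H by lia. reflexivity. Qed.

Lemma rsum_le n f g : (forall i, (i < n)%nat -> f i <= g i) -> rsum n f <= rsum n g.
Proof. induction n; simpl; intros H; [lra|]. assert (f n <= g n) by (apply H; lia).
 assert (rsum n f <= rsum n g) by (apply IHn; intros; apply H; lia). lra. Qed.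

Lemma rsum_nonneg n f : (forall i, (i < n)%nat -> 0 <= f i) -> 0 <= rsum n f.
Proof. intros H. replace 0 with (rsum n (fun _ => 0)). apply rsum_le; auto.
 induction n; simpl; auto. rewrite IHn; try lra; intros; apply H; lia. Qed.

Lemma rsum_scal n c f : rsum n (fun i => c * f i) = c * rsum n f.
Proof. induction n; simpl; [ring|]. rewrite IHn; ring. Qed.

Lemma rsum_plus n f g : rsum n (fun i => f i + g i) = rsum n f + rsum n g.
Proof. induction n; simpl; [ring|]. rewrite IHn; ring. Qed.

Lemma rsum_split n m f : rsum (n + m) f = rsum n f + rsum m (fun i => f (n + i)%nat).
Proof. induction m; simpl. rewrite Nat.add_0_r; ring. rewrite Nat.add_succ_r; simpl; rewrite IHm; ring. Qed.

Lemma rsum_first n f : rsum (S n) f = f O + rsum n (fun i => f (S i)).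
Proof. replace (S n) with (1 + n)%nat by lia. rewrite rsum_split. simpl. ring. Qed.

Lemma rsum_exch n m (f : nat -> nat -> R) :
  rsum n (fun i => rsum m (fun j => f i j)) = rsum m (fun j => rsum n (fun i => f i j)).
Proof. induction n; simpl. induction m; simpl; [auto| rewrite <- IHm; ring].
 rewrite IHn. rewrite <- rsum_plus. reflexivity. Qed.

Lemma rsum_mono n m f : (n <= m)%nat -> (forall i, 0 <= f i) -> rsum n f <= rsum m f.
Proof. intros H Hf. replace m with (n + (m - n))%nat by lia. rewrite rsum_split.
 assert (0 <= rsum (m - n) (fun i => f (n + i)%nat)) by (apply rsum_nonneg; auto). lra. Qed.

Lemma rsum_sum_f n f : rsum (S n) f = sum_f_R0 f n.
Proof. induction n; simpl; [ring|]. simpl in IHn. rewrite <- IHn. ring. Qed.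

Lemma cv_shift u l : Un_cv u l -> Un_cv (fun n => u (S n)) l.
Proof. intros H e He. destruct (H e He) as [N HN]. exists N. intros n Hn. apply HN. lia. Qed.

Lemma cv_affine u l a b : Un_cv u l -> Un_cv (fun n => a * u n + b) (a * l + b).
Proof. intros H. apply CV_plus. apply CV_mult; auto. intros e He; exists O; intros; unfold Rdist; rewrite Rminus_diag, Rabs_R0; lra.
 intros e He; exists O; intros; unfold Rdist; rewrite Rminus_diag, Rabs_R0; lra. Qed.

Lemma cv_ext u v l : (forall n, u n = v n) -> Un_cv u l -> Un_cv v l.
Proof. intros E H e He. destruct (H e He) as [N HN]. exists N. intros n Hn. rewrite <- E. auto. Qed.

Lemma sum_f_nonneg_le f l : (forall n, 0 <= f n) -> infinite_sum f l -> forall n, sum_f_R0 f n <= l.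
Proof. intros Hf H n. apply growing_ineq; auto. intro k. simpl. specialize (Hf (S k)). lra. Qed.

Lemma mpowQ1 x y : mpow Q 1 x y = Q x y.
Proof. destruct x as [[|] [|]], y as [[|] [|]]; unfold mpow, mmul, idm, sumS, Q; simpl; lra. Qed.

Lemma mpowQ2 n x y : mpow Q (S (S n)) x y = 1/4.
Proof. revert y; induction n; intro y.
 - change (mpow Q 2 x y) with (sumS (fun z => mpow Q 1 x z * Q z y)). unfold sumS. rewrite !mpowQ1.
   destruct x as [[|] [|]], y as [[|] [|]]; unfold Q; simpl; lra.
 - change (mpow Q (S (S (S n))) x y) with (sumS (fun z => mpow Q (S (S n)) x z * Q z y)). unfold sumS. rewrite !IHn.
   destruct y as [[|] [|]]; unfold Q; simpl; lra.
Qed.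

Section A.
Variables (K : nat -> R) (a0 a1 beta : R).
Definition gexp (y : Sigma) := exp (beta * fobs a0 a1 y + 0).
Definition Aform (x y : Sigma) := gexp y * (K 1 * Q x y + (1 - K 1) / 4).

Lemma Msum x y n : sum_f_R0 (fun n => Mmat K a0 a1 (S n) beta 0 x y) n =
   gexp y / 4 * sum_f_R0 (fun n => K (S n)) n + (K 1 * Q x y * gexp y - gexp y / 4 * K 1).
Proof. induction n; simpl.
 - unfold Mmat. rewrite mpowQ1. unfold gexp. ring.
 - rewrite IHn. unfold Mmat. idtac. rewrite mpowQ2. unfold gexp. field.
Qed.

Lemma A_exists : infinite_sum (fun n => K (S n)) 1 -> is_A0 K a0 a1 beta Aform.
Proof. intros H x y. unfold infinite_sum.
 change (Un_cv (sum_f_R0 (fun n => Mmat K a0 a1 (S n) beta 0 x y)) (Aform x y)).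
 apply cv_ext with (u := fun n => gexp y / 4 * sum_f_R0 (fun n => K (S n)) n + (K 1 * Q x y * gexp y - gexp y / 4 * K 1)).
 intros; symmetry; apply Msum.
 replace (Aform x y) with (gexp y / 4 * 1 + (K 1 * Q x y * gexp y - gexp y / 4 * K 1)) by (unfold Aform; field).
 apply cv_affine. exact H. Qed.

Lemma A_unique A : infinite_sum (fun n => K (S n)) 1 -> is_A0 K a0 a1 beta A -> forall x y, A x y = Aform x y.
Proof. intros H HA x y. eapply uniqueness_sum. apply HA. apply A_exists; auto. Qed.
End A.

Section Eig.
Variables (K : nat -> R) (a0 a1 beta : R).
Hypothesis HK1 : 0 < K 1%nat <= 1.
Definition E0 (b : bool) := exp (beta * a0 * sgn b).
Definition E1 (b : bool) := exp (beta * a1 * sgn b).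
Definition c0 := cosh (a0 * beta).
Definition c1 := cosh (a1 * beta).
Definition c01 := cosh ((a0 + a1) * beta).
Definition hh (b : bool) := K 1%nat / 2 * E1 b + (1 - K 1%nat) / 2 * c1.
Definition lam := K 1%nat * c01 + (1 - K 1%nat) * c0 * c1.

Lemma gexp_split p s : gexp a0 a1 beta (p, s) = E0 s * E1 p.
Proof. unfold gexp, E0, E1, fobs; simpl. rewrite <- exp_plus. f_equal. ring. Qed.

Lemma c0_E : c0 = (E0 true + E0 false) / 2.
Proof. unfold c0, cosh, E0, sgn. f_equal. f_equal; f_equal; ring. Qed.
Lemma c1_E : c1 = (E1 true + E1 false) / 2.
Proof. unfold c1, cosh, E1, sgn. f_equal. f_equal; f_equal; ring. Qed.
Lemma c01_E : c01 = (E0 true * E1 true + E0 false * E1 false) / 2.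
Proof. unfold c01, cosh, E0, E1, sgn. rewrite <- !exp_plus. f_equal. f_equal; f_equal; ring. Qed.

Lemma E0_pos b : 0 < E0 b. Proof. apply exp_pos. Qed.
Lemma E1_pos b : 0 < E1 b. Proof. apply exp_pos. Qed.
Lemma c0_pos : 0 < c0. Proof. rewrite c0_E. pose proof (E0_pos true); pose proof (E0_pos false); lra. Qed.
Lemma c1_pos : 0 < c1. Proof. rewrite c1_E. pose proof (E1_pos true); pose proof (E1_pos false); lra. Qed.
Lemma c01_pos : 0 < c01. Proof. rewrite c01_E. pose proof (E0_pos true); pose proof (E0_pos false);
  pose proof (E1_pos true); pose proof (E1_pos false). assert (0 < E0 true * E1 true) by (apply Rmult_lt_0_compat; auto).
  assert (0 < E0 false * E1 false) by (apply Rmult_lt_0_compat; auto). lra. Qed.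

Lemma hh_pos b : 0 < hh b.
Proof. unfold hh. pose proof (E1_pos b). pose proof c1_pos.
 assert (0 < K 1%nat / 2 * E1 b) by (apply Rmult_lt_0_compat; lra).
 assert (0 <= (1 - K 1%nat) / 2 * c1) by (apply Rmult_le_pos; lra). lra. Qed.

Lemma lam_pos : 0 < lam.
Proof. unfold lam. pose proof c01_pos; pose proof c0_pos; pose proof c1_pos.
 assert (0 < K 1%nat * c01) by (apply Rmult_lt_0_compat; lra).
 assert (0 <= (1 - K 1%nat) * c0 * c1) by (apply Rmult_le_pos; [apply Rmult_le_pos|]; lra). lra. Qed.

Lemma lam_formula : lambda_formula K a0 a1 beta = lam.
Proof. unfold lambda_formula, lam. fold c0 c1 c01. pose proof c0_pos; pose proof c1_pos. field. lra. Qed.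

Lemma lam_hh : lam = E0 true * hh true + E0 false * hh false.
Proof. unfold lam, hh. rewrite c01_E, c0_E, c1_E. field. Qed.

Let A := Aform K a0 a1 beta.

Lemma A_snd v p p' s : mvec A v (p, s) = mvec A v (p', s).
Proof. unfold mvec, sumS, A, Aform, Q. simpl. reflexivity. Qed.

Lemma Av_form v : (forall t, v (false, t) = v (true, t)) ->
  forall x, mvec A v x = hh (snd x) * (E0 true * v (false, true) + E0 false * v (false, false)).
Proof. intros Hv x. unfold mvec, sumS, A, Aform. rewrite !gexp_split. rewrite <- !Hv.
 unfold hh. rewrite c1_E. destruct x as [p [|]]; unfold Q; simpl; field. Qed.
End Eig.

Section PF.
Variables (K : nat -> R) (a0 a1 beta : R).
Hypothesis HK1 : 0 < K 1%nat <= 1.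
Let A := Aform K a0 a1 beta.

Lemma PF_Aform : PF_eigenvalue A (lam K a0 a1 beta).
Proof.
 pose proof (lam_pos K a0 a1 beta HK1) as Hl.
 split; [lra|]. split.
 - exists (fun x => hh K a1 beta (snd x)). split.
   + intros; apply hh_pos; auto.
   + intros x. rewrite (Av_form K a0 a1 beta); [|reflexivity]. simpl. rewrite (lam_hh K a0 a1 beta). ring.
 - intros a b u w [x0 Hx0] Hu Hw.
   destruct (Req_dec (a^2+b^2) 0) as [HD|HD]. { rewrite HD. nra. }
   assert (HDp : 0 < a^2+b^2) by nra.
   assert (Hux : forall x, u x = (a * mvec A u x + b * mvec A w x) / (a^2+b^2)).
   { intros x. rewrite Hu, Hw. field. lra. }
   assert (Hwx : forall x, w x = (a * mvec A w x - b * mvec A u x) / (a^2+b^2)).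
   { intros x. rewrite Hu, Hw. field. lra. }
   assert (Su : forall t, u (false, t) = u (true, t)).
   { intros t. rewrite (Hux (false,t)), (Hux (true,t)). unfold A. rewrite (A_snd K a0 a1 beta u false true), (A_snd K a0 a1 beta w false true). reflexivity. }
   assert (Sw : forall t, w (false, t) = w (true, t)).
   { intros t. rewrite (Hwx (false,t)), (Hwx (true,t)). unfold A. rewrite (A_snd K a0 a1 beta u false true), (A_snd K a0 a1 beta w false true). reflexivity. }
   pose proof (Av_form K a0 a1 beta u Su) as Au. pose proof (Av_form K a0 a1 beta w Sw) as Aw.
   set (Lu := E0 a0 beta true * u (false, true) + E0 a0 beta false * u (false, false)) in *.
   set (Lw := E0 a0 beta true * w (false, true) + E0 a0 beta false * w (false, false)) in *.
   pose proof (Hu (false,true)) as u1. pose proof (Hu (false,false)) as u2.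
   pose proof (Hw (false,true)) as w1. pose proof (Hw (false,false)) as w2.
   fold A in Au, Aw. rewrite Au in u1, u2. rewrite Aw in w1, w2. simpl in u1, u2, w1, w2.
   set (l := lam K a0 a1 beta) in *.
   assert (E1 : l * Lu = a * Lu - b * Lw).
   { unfold l. rewrite (lam_hh K a0 a1 beta). unfold Lu, Lw. 
     transitivity (E0 a0 beta true * (hh K a1 beta true * Lu) + E0 a0 beta false * (hh K a1 beta false * Lu)). unfold Lu; ring.
     rewrite u1, u2. ring. }
   assert (E2 : l * Lw = b * Lu + a * Lw).
   { unfold l. rewrite (lam_hh K a0 a1 beta). 
     transitivity (E0 a0 beta true * (hh K a1 beta true * Lw) + E0 a0 beta false * (hh K a1 beta false * Lw)). ring.
     rewrite w1, w2. unfold Lu, Lw. ring. }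
   assert (G1 : (l-a)*Lu + b*Lw = 0) by lra. assert (G2 : (l-a)*Lw - b*Lu = 0) by lra.
   assert (F1 : ((l - a)^2 + b^2) * Lu = 0).
   { transitivity ((l-a)*((l-a)*Lu+b*Lw) - b*((l-a)*Lw - b*Lu)); [ring| rewrite G1, G2; ring]. }
   assert (F2 : ((l - a)^2 + b^2) * Lw = 0).
   { transitivity ((l-a)*((l-a)*Lw-b*Lu) + b*((l-a)*Lu + b*Lw)); [ring| rewrite G1, G2; ring]. }
   destruct (Req_dec Lu 0) as [HLu|HLu]; [destruct (Req_dec Lw 0) as [HLw|HLw]|].
   + exfalso. rewrite HLu in u1, u2. rewrite HLw in w1, w2.
     rewrite Rmult_0_r in u1, u2, w1, w2.
     assert (forall p q, 0 = a * p - b * q -> 0 = b * p + a * q -> p = 0 /\ q = 0) as Z.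
     { intros p q H1 H2. split; apply (Rmult_eq_reg_l (a^2+b^2)); try lra.
       transitivity (a*(a*p-b*q) + b*(b*p+a*q)); [ring| rewrite <- H1, <- H2; ring].
       transitivity (a*(b*p+a*q) - b*(a*p-b*q)); [ring| rewrite <- H1, <- H2; ring]. }
     destruct (Z _ _ u1 w1) as [z1 z2]. destruct (Z _ _ u2 w2) as [z3 z4].
     destruct x0 as [[|] [|]]; [rewrite <- Su in Hx0; rewrite <- Sw in Hx0|rewrite <- Su in Hx0; rewrite <- Sw in Hx0| |];
     destruct Hx0; auto.
   + assert ((l - a)^2 + b^2 = 0). { apply (Rmult_eq_reg_r Lw); auto. lra. }
     pose proof (pow2_ge_0 (l-a)); pose proof (pow2_ge_0 b).
     assert (Hb: b^2 = 0) by lra. assert (Ha: (l-a)^2 = 0) by lra.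
     assert (l - a = 0) by (destruct (Req_dec (l-a) 0); auto; exfalso; apply (pow_nonzero (l-a) 2); auto). rewrite Hb. replace a with l by lra. lra.
   + assert ((l - a)^2 + b^2 = 0). { apply (Rmult_eq_reg_r Lu); auto. lra. }
     pose proof (pow2_ge_0 (l-a)); pose proof (pow2_ge_0 b).
     assert (Hb: b^2 = 0) by lra. assert (Ha: (l-a)^2 = 0) by lra.
     assert (l - a = 0) by (destruct (Req_dec (l-a) 0); auto; exfalso; apply (pow_nonzero (l-a) 2); auto). rewrite Hb. replace a with l by lra. lra.
Qed.
End PF.

Lemma eps_avg_ext n F G : (forall e, F e = G e) -> eps_avg n F = eps_avg n G.
Proof. revert F G; induction n; intros F G H; simpl; [apply H|].
 rewrite (IHn (fun e => F (upd e n 1)) (fun e => G (upd e n 1))) by auto.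
 rewrite (IHn (fun e => F (upd e n (-1))) (fun e => G (upd e n (-1)))) by auto. reflexivity. Qed.

Lemma eps_avg_scal n c F : eps_avg n (fun e => c * F e) = c * eps_avg n F.
Proof. revert F; induction n; intros F; simpl; [reflexivity|].
 rewrite (IHn (fun e => F (upd e n 1))), (IHn (fun e => F (upd e n (-1)))). field. Qed.

Lemma eps_avg_plus n F G : eps_avg n (fun e => F e + G e) = eps_avg n F + eps_avg n G.
Proof. revert F G; induction n; intros F G; simpl; [reflexivity|].
 rewrite (IHn (fun e => F (upd e n 1))), (IHn (fun e => F (upd e n (-1)))). field. Qed.

Lemma eps_avg_const n c : eps_avg n (fun _ => c) = c.
Proof. induction n; simpl; auto. rewrite IHn. field. Qed.

Lemma eps_avg_rsum n m (F : nat -> (nat -> R) -> R) :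
  eps_avg n (fun e => rsum m (fun i => F i e)) = rsum m (fun i => eps_avg n (F i)).
Proof. induction m; simpl. apply eps_avg_const. rewrite eps_avg_plus, IHm. reflexivity. Qed.

Definition dep (m : nat) (F : (nat -> R) -> R) :=
  forall e e', (forall j, (j < m)%nat -> e j = e' j) -> F e = F e'.

Lemma dep_upd m F e k v : dep m F -> (m <= k)%nat -> F (upd e k v) = F e.
Proof. intros H Hk. apply H. intros j Hj. unfold upd. destruct (Nat.eqb_spec j k); [lia|auto]. Qed.

Lemma eps_avg_red m d F : dep m F -> eps_avg (m + d) F = eps_avg m F.
Proof. intros H. induction d. rewrite Nat.add_0_r; auto.
 rewrite Nat.add_succ_r. simpl. rewrite <- IHd.
 rewrite (eps_avg_ext _ (fun e => F (upd e (m + d) 1)) F), (eps_avg_ext _ (fun e => F (upd e (m + d) (-1))) F).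
 field. all: intros; apply (dep_upd m); auto; lia. Qed.

Lemma eps_avg_red' m n F : dep m F -> (m <= n)%nat -> eps_avg n F = eps_avg m F.
Proof. intros H Hn. replace n with (m + (n - m))%nat by lia. apply eps_avg_red; auto. Qed.

Lemma peel n F g : dep n F ->
  eps_avg (S n) (fun e => F e * g (e n)) = eps_avg n F * ((g 1 + g (-1)) / 2).
Proof. intros H. simpl.
 rewrite (eps_avg_ext _ _ (fun e => g 1 * F e)), (eps_avg_ext _ (fun e => F (upd e n (-1)) * g (upd e n (-1) n)) (fun e => g (-1) * F e)).
 rewrite !eps_avg_scal. field.
 all: intros e; rewrite (dep_upd n F e n) by (auto; lia); unfold upd; rewrite Nat.eqb_refl; ring. Qed.

Section Z.
Variables (K : nat -> R) (beta h : R).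

Lemma Zfuel_fuel f1 f2 w N : (N <= f1)%nat -> (N <= f2)%nat -> Zfuel K w beta h f1 N = Zfuel K w beta h f2 N.
Proof. revert f2 N; induction f1; intros f2 N H1 H2.
 - assert (N = O) by lia. subst. destruct f2; reflexivity.
 - destruct N; [destruct f2; reflexivity|]. destruct f2; [lia|]. cbn [Zfuel].
   apply rsum_ext. intros i Hi. rewrite (IHf1 f2) by lia. reflexivity. Qed.

Lemma Zfuel_w f w w' N : (forall j, (1 <= j <= N)%nat -> w j = w' j) -> Zfuel K w beta h f N = Zfuel K w' beta h f N.
Proof. revert N; induction f; intros N H.
 - destruct N; reflexivity.
 - destruct N; [reflexivity|]. cbn [Zfuel]. apply rsum_ext. intros i Hi. rewrite (IHf (S N - S i)%nat), (H (S N)) by (try intros; lia || (apply H; lia)). reflexivity. Qed.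

Lemma Zpart_S w n : Zpart K w beta h (S n) = rsum (S n) (fun i => Zpart K w beta h (n - i) * K (S i) * exp (beta * w (S n) + h)).
Proof. unfold Zpart at 1. cbn [Zfuel]. apply rsum_ext. intros i Hi. unfold Zpart. rewrite (Zfuel_fuel n (n - i)) by lia. reflexivity. Qed.

Variables (a0 a1 : R).
Definition Zm (e : nat -> R) (m : nat) := Zpart K (omega a0 a1 e) beta h m.

Lemma Zm_dep m : dep (S m) (fun e => Zm e m).
Proof. intros e e' H. unfold Zm, Zpart. apply Zfuel_w. intros j Hj. unfold omega. rewrite (H j), (H (pred j)) by lia. reflexivity. Qed.

Definition GZ (n : nat) := eps_avg (S n) (fun e => Zm e n * exp (beta * a1 * e n)).
End Z.

Lemma dep_mono m m' F : dep m F -> (m <= m')%nat -> dep m' F.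
Proof. intros H Hm e e' He. apply H. intros; apply He; lia. Qed.

Section EZ.
Variables (K : nat -> R) (a0 a1 beta h : R).

Lemma exp_split x y : exp (beta * (a0 * x + a1 * y) + h) = exp h * exp (beta * a1 * y) * exp (beta * a0 * x).
Proof. rewrite <- !exp_plus. f_equal. ring. Qed.

Lemma g0 : (exp (beta * a0 * 1) + exp (beta * a0 * (-1))) / 2 = c0 a0 beta.
Proof. unfold c0, cosh. f_equal. f_equal; f_equal; ring. Qed.
Lemma g1 : (exp (beta * a1 * 1) + exp (beta * a1 * (-1))) / 2 = c1 a1 beta.
Proof. unfold c1, cosh. f_equal. f_equal; f_equal; ring. Qed.
Lemma g01 : (exp (beta * (a0 + a1) * 1) + exp (beta * (a0 + a1) * (-1))) / 2 = c01 a0 a1 beta.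
Proof. unfold c01, cosh. f_equal. f_equal; f_equal; ring. Qed.

Notation EZ' := (EZ K a0 a1 beta h).
Notation Zm' := (Zm K beta h a0 a1).
Notation GZ' := (GZ K beta h a0 a1).

Lemma omega_S e n : omega a0 a1 e (S n) = a0 * e (S n) + a1 * e n.
Proof. reflexivity. Qed.

Lemma term_first n (gg : R -> R) :
  eps_avg (S (S n)) (fun e => Zm' e n * K 1 * exp h * exp (beta * a1 * e n) * gg (e (S n))) =
  K 1 * exp h * GZ' n * ((gg 1 + gg (-1)) / 2).
Proof.
 transitivity (eps_avg (S (S n)) (fun e => (K 1 * exp h * (Zm' e n * exp (beta * a1 * e n))) * gg (e (S n)))).
 { apply eps_avg_ext; intros; ring. }
 rewrite peel. rewrite eps_avg_scal. reflexivity.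
 intros e e' H. rewrite (Zm_dep K beta h a0 a1 n e e' H), (H n) by lia. reflexivity. Qed.

Lemma term_rest n j (gg : R -> R) : (j < n)%nat ->
  eps_avg (S (S n)) (fun e => Zm' e (n - S j) * K (S (S j)) * exp h * exp (beta * a1 * e n) * gg (e (S n))) =
  K (S (S j)) * exp h * c1 a1 beta * EZ' (n - S j) * ((gg 1 + gg (-1)) / 2).
Proof. intros Hj.
 transitivity (eps_avg (S (S n)) (fun e => ((K (S (S j)) * exp h * Zm' e (n - S j)) * exp (beta * a1 * e n)) * gg (e (S n)))).
 { apply eps_avg_ext; intros; ring. }
 assert (D : dep n (fun e => K (S (S j)) * exp h * Zm' e (n - S j))).
 { intros e e' H. rewrite (Zm_dep K beta h a0 a1 (n - S j) e e'); auto. intros; apply H; lia. }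
 rewrite peel. rewrite (peel n _ (fun s => exp (beta * a1 * s))) by exact D. rewrite g1.
 rewrite eps_avg_scal. unfold EZ. rewrite (eps_avg_red' (S (n - S j)) n). unfold Zm; ring.
 apply Zm_dep. lia.
 intros e e' H. rewrite (D e e'), (H n) by (auto; intros; apply H; lia). reflexivity. Qed.

Definition Xn n := K 1 * exp h * GZ' n + rsum n (fun j => K (S (S j)) * exp h * c1 a1 beta * EZ' (n - S j)).

Lemma EZ_S n : EZ' (S n) = c0 a0 beta * Xn n.
Proof.
 unfold EZ at 1.
 rewrite (eps_avg_ext _ _ (fun e => rsum (S n) (fun i => Zm' e (n - i) * K (S i) * exp h * exp (beta * a1 * e n) * exp (beta * a0 * e (S n))))).
 2: { intros e. unfold Zm. rewrite Zpart_S. apply rsum_ext. intros i _. rewrite omega_S, exp_split. ring. }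
 rewrite eps_avg_rsum, rsum_first. unfold Xn.
 rewrite Nat.sub_0_r, (term_first n (fun s => exp (beta * a0 * s))), g0.
 rewrite (rsum_ext n _ (fun j => K (S (S j)) * exp h * c1 a1 beta * EZ' (n - S j) * c0 a0 beta)).
 2: { intros j Hj. rewrite (term_rest n j (fun s => exp (beta * a0 * s))), g0 by auto. reflexivity. }
 rewrite (rsum_ext n _ (fun j => c0 a0 beta * (K (S (S j)) * exp h * c1 a1 beta * EZ' (n - S j)))) by (intros; ring).
 rewrite rsum_scal. ring. Qed.

Lemma GZ_S n : GZ' (S n) = c01 a0 a1 beta * Xn n.
Proof.
 unfold GZ at 1.
 rewrite (eps_avg_ext _ _ (fun e => rsum (S n) (fun i => Zm' e (n - i) * K (S i) * exp h * exp (beta * a1 * e n) * exp (beta * (a0 + a1) * e (S n))))).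
 2: { intros e. unfold Zm. rewrite Zpart_S, Rmult_comm, <- rsum_scal.
      apply rsum_ext. intros i _. rewrite omega_S, exp_split.
      replace (exp (beta * (a0 + a1) * e (S n))) with (exp (beta * a0 * e (S n)) * exp (beta * a1 * e (S n))) by (rewrite <- exp_plus; f_equal; ring). ring. }
 rewrite eps_avg_rsum, rsum_first. unfold Xn.
 rewrite Nat.sub_0_r, (term_first n (fun s => exp (beta * (a0 + a1) * s))), g01.
 rewrite (rsum_ext n _ (fun j => K (S (S j)) * exp h * c1 a1 beta * EZ' (n - S j) * c01 a0 a1 beta)).
 2: { intros j Hj. rewrite (term_rest n j (fun s => exp (beta * (a0 + a1) * s))), g01 by auto. reflexivity. }
 rewrite (rsum_ext n _ (fun j => c01 a0 a1 beta * (K (S (S j)) * exp h * c1 a1 beta * EZ' (n - S j)))) by (intros; ring).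
 rewrite rsum_scal. ring. Qed.

Lemma GZ_0 : GZ' 0 = c1 a1 beta.
Proof. unfold GZ. rewrite <- g1. 
 rewrite (eps_avg_ext _ _ (fun e => 1 * exp (beta * a1 * e O))) by (intros; reflexivity).
 rewrite (peel 0 (fun _ => 1) (fun s => exp (beta * a1 * s))). simpl. ring.
 intros e e' _. reflexivity. Qed.

Lemma EZ_0 : EZ' 0 = 1.
Proof. unfold EZ, Zpart. simpl. field. Qed.
End EZ.

Section Rec.
Variables (K : nat -> R) (a0 a1 beta h : R).
Definition psi (t : nat) := exp h * K t * (if Nat.eqb t 1 then c01 a0 a1 beta else c0 a0 beta * c1 a1 beta).
Definition kap (t : nat) := exp h * c0 a0 beta * c1 a1 beta * K t.
Notation EZ' := (EZ K a0 a1 beta h).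

Lemma EZ_rec n : EZ' (S n) = rsum n (fun i => psi (S i) * EZ' (n - i)) + kap (S n).
Proof. destruct n as [|m].
 - rewrite EZ_S. unfold Xn. rewrite GZ_0. unfold kap. simpl. ring.
 - rewrite EZ_S. unfold Xn at 1. rewrite GZ_S.
   rewrite (rsum_first m (fun i => psi (S i) * EZ' (S m - i))). rewrite Nat.sub_0_r. rewrite (EZ_S K a0 a1 beta h m).
   change (rsum (S m) ?f) with (rsum m f + f m). cbv beta. replace (S m - S m)%nat with O by lia. rewrite EZ_0.
   rewrite (rsum_ext m (fun i => psi (S (S i)) * EZ' (S m - S i)) (fun i => c0 a0 beta * (K (S (S i)) * exp h * c1 a1 beta * EZ' (S m - S i)))).
   2: { intros i _. unfold psi. simpl Nat.eqb. cbv iota. ring. }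
   rewrite rsum_scal. unfold psi, kap. simpl. ring. Qed.
End Rec.

Lemma ln_le' x y : 0 < x -> x <= y -> ln x <= ln y.
Proof. intros Hx Hy. destruct (Req_dec x y). subst; lra. left; apply ln_increasing; lra. Qed.

Section Ana.
Variables (z psi kap : nat -> R) (r : R).
Hypothesis Hpsi : forall t, (1 <= t)%nat -> 0 < psi t.
Hypothesis Hr : 0 < r.
Hypothesis Hk1 : kap 1%nat = r * psi 1%nat.
Hypothesis Hk2 : forall t, (2 <= t)%nat -> kap t = psi t.
Hypothesis Hz0 : 0 < z O.
Hypothesis Hrec : forall n, z (S n) = rsum n (fun i => psi (S i) * z (n - i)%nat) + kap (S n).

Lemma kap_pos t : (1 <= t)%nat -> 0 < kap t.
Proof. intros Ht. destruct t as [|[|t]]; [lia| |]. rewrite Hk1. apply Rmult_lt_0_compat; auto.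
 rewrite Hk2 by lia. apply Hpsi; lia. Qed.

Lemma z_pos n : 0 < z n.
Proof. induction n as [n IH] using lt_wf_ind. destruct n; auto. rewrite Hrec.
 assert (0 <= rsum n (fun i => psi (S i) * z (n - i)%nat)).
 { apply rsum_nonneg. intros i Hi. apply Rmult_le_pos; left; [apply Hpsi; lia| apply IH; lia]. }
 pose proof (kap_pos (S n) ltac:(lia)). lra. Qed.

Definition cc := Rmin 1 (1 / r).
Lemma cc_pos : 0 < cc.
Proof. unfold cc. apply Rmin_pos. lra. apply Rdiv_lt_0_compat; lra. Qed.
Lemma cc_le1 : cc <= 1. Proof. apply Rmin_l. Qed.

Lemma cc_kap a : cc * kap (S a) <= psi (S a).
Proof. destruct a.
 - rewrite Hk1. unfold cc. pose proof (Rmin_r 1 (1/r)). pose proof (Hpsi 1%nat).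
   replace (psi 1%nat) with ((1/r) * (r * psi 1%nat)) at 2 by (field; lra).
   apply Rmult_le_compat_r; auto. apply Rmult_le_pos; left; auto.
 - rewrite Hk2 by lia. pose proof cc_le1. pose proof (Hpsi (S (S a))). 
   assert (0 < psi (S (S a))) by (apply H0; lia). nra. Qed.

Lemma supermult a b : cc * z (S a) * z (S b) <= z (S a + S b)%nat.
Proof. induction a as [a IH] using lt_wf_ind.
 change (S a + S b)%nat with (S (a + S b)). rewrite (Hrec (a + S b)).
 set (f := fun i => psi (S i) * z (a + S b - i)%nat).
 assert (Hf : forall i, 0 <= f i). { intros i; unfold f. apply Rmult_le_pos; left; [apply Hpsi; lia| apply z_pos]. }
 assert (H1 : rsum (S a) f <= rsum (a + S b) f) by (apply rsum_mono; auto; lia).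
 pose proof (kap_pos (S (a + S b)) ltac:(lia)).
 assert (H2 : cc * z (S a) * z (S b) <= rsum (S a) f).
 { simpl rsum. rewrite (Hrec a). unfold f at 2. replace (a + S b - a)%nat with (S b) by lia.
   rewrite Rmult_plus_distr_l, Rmult_plus_distr_r, <- rsum_scal, Rmult_comm, <- rsum_scal.
   apply Rplus_le_compat.
   - apply rsum_le. intros i Hi. unfold f.
     replace (a + S b - i)%nat with (S (a - S i) + S b)%nat by lia.
     replace (a - i)%nat with (S (a - S i)) by lia.
     pose proof (IH (a - S i)%nat ltac:(lia)). pose proof (Hpsi (S i) ltac:(lia)). pose proof (z_pos (S b)).
     nra.
   - pose proof (cc_kap a). pose proof (z_pos (S b)). nra. }
 lra. Qed.

Definition yy N := cc * z N.
Lemma yy_pos N : 0 < yy N.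
Proof. unfold yy. apply Rmult_lt_0_compat. apply cc_pos. apply z_pos. Qed.

Lemma ysuper M N : (1 <= M)%nat -> (1 <= N)%nat -> yy M * yy N <= yy (M + N).
Proof. intros HM HN. destruct M as [|a]; [lia|]. destruct N as [|b]; [lia|].
 unfold yy. pose proof (supermult a b). pose proof cc_pos. 
 replace (cc * z (S a) * (cc * z (S b))) with (cc * (cc * z (S a) * z (S b))) by ring.
 apply Rmult_le_compat_l; lra. Qed.

Lemma grow s D n0 : (1 <= n0)%nat -> exp (s * INR n0) <= yy n0 -> 0 <= D ->
  (forall N, (1 <= N <= n0)%nat -> exp (s * INR N) * D <= yy N) ->
  forall N, (1 <= N)%nat -> exp (s * INR N) * D <= yy N.
Proof. intros Hn0 Hy HD Hinit N. induction N as [N IH] using lt_wf_ind. intros HN.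
 destruct (le_lt_dec N n0). { apply Hinit; lia. }
 replace N with (n0 + (N - n0))%nat by lia.
 eapply Rle_trans; [|apply ysuper; lia].
 rewrite plus_INR, Rmult_plus_distr_l, exp_plus, Rmult_assoc.
 apply Rmult_le_compat; auto. left; apply exp_pos. apply Rmult_le_pos; auto. left; apply exp_pos.
 apply IH; lia. Qed.

Definition mu := Rmin 1 (yy 1).
Lemma mu_pos : 0 < mu. Proof. unfold mu. apply Rmin_pos. lra. apply yy_pos. Qed.
Lemma mu_le1 : mu <= 1. Proof. apply Rmin_l. Qed.

Lemma ypow N : (1 <= N)%nat -> mu ^ N <= yy N.
Proof. intros HN. induction N; [lia|]. destruct N. simpl. rewrite Rmult_1_r. apply Rmin_r.
 replace (S (S N)) with (1 + S N)%nat by lia. eapply Rle_trans; [|apply ysuper; lia].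
 change (mu ^ (1 + S N)) with (mu * mu ^ (S N)).
 apply Rmult_le_compat. left; apply mu_pos. apply pow_le; left; apply mu_pos. apply Rmin_r. apply IHN; lia. Qed.

Lemma lower s n0 : (1 <= n0)%nat -> exp (s * INR n0) <= yy n0 ->
  exists L, forall N, (1 <= N)%nat -> s * INR N + L <= ln (z N).
Proof. intros Hn0 Hy.
 set (D := mu ^ n0 * exp (- (Rabs s * INR n0))).
 assert (HD : 0 < D). { unfold D. apply Rmult_lt_0_compat. apply pow_lt, mu_pos. apply exp_pos. }
 assert (Hb : forall N, (1 <= N)%nat -> exp (s * INR N) * D <= yy N).
 { apply (grow s D n0); auto. lra. intros N [HN1 HN2]. unfold D.
   replace (exp (s * INR N) * (mu ^ n0 * exp (- (Rabs s * INR n0)))) with (mu ^ n0 * exp (s * INR N - Rabs s * INR n0))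
     by (unfold Rminus; rewrite exp_plus; ring).
   assert (E1 : exp (s * INR N - Rabs s * INR n0) <= 1).
   { rewrite <- exp_0. destruct (Req_dec (s * INR N - Rabs s * INR n0) 0) as [E|E]. rewrite E; lra.
     left. apply exp_increasing.
     assert (s * INR N <= Rabs s * INR N). { apply Rmult_le_compat_r. apply pos_INR. apply RRle_abs. }
     assert (Rabs s * INR N <= Rabs s * INR n0). { apply Rmult_le_compat_l. apply Rabs_pos. apply le_INR; lia. }
     lra. }
   assert (E2 : mu ^ n0 <= mu ^ N).
   { replace n0 with (N + (n0 - N))%nat by lia. rewrite pow_add.
     pose proof (pow_le mu N (Rlt_le _ _ mu_pos)).
     assert (mu ^ (n0 - N) <= 1). { replace 1 with (1 ^ (n0 - N)) by apply pow1. apply pow_incr. split; [left; apply mu_pos| apply mu_le1]. }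
     nra. }
   pose proof (ypow N HN1). pose proof (pow_le mu n0 (Rlt_le _ _ mu_pos)).
   assert (0 < exp (s * INR N - Rabs s * INR n0)) by apply exp_pos. nra. }
 exists (ln D - ln cc). intros N HN.
 assert (ln (exp (s * INR N) * D) <= ln (yy N)).
 { apply ln_le'. apply Rmult_lt_0_compat; auto. apply exp_pos. apply Hb; auto. }
 rewrite ln_mult, ln_exp in H by (auto; apply exp_pos). unfold yy in H.
 rewrite ln_mult in H; [|apply cc_pos|apply z_pos]. lra. Qed.

Definition Psi T := rsum T (fun i => psi (S i)).

Lemma z_trunc n T : (T <= n)%nat -> rsum T (fun i => psi (S i) * z (n - i)%nat) <= z (S n).
Proof. intros HT. rewrite Hrec. pose proof (kap_pos (S n) ltac:(lia)).
 assert (rsum T (fun i => psi (S i) * z (n - i)%nat) <= rsum n (fun i => psi (S i) * z (n - i)%nat)).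
 { apply rsum_mono; auto. intros i. apply Rmult_le_pos; left; [apply Hpsi; lia|apply z_pos]. }
 lra. Qed.

Lemma rsum_trunc f T m : (forall i, 0 <= f i) ->
  rsum T (fun i => if (i <? m)%nat then f i else 0) <= rsum m f.
Proof. intros Hf. destruct (le_lt_dec T m).
 - eapply Rle_trans; [|apply (rsum_mono T m); auto]. apply rsum_le. intros i Hi.
   destruct (i <? m)%nat; auto. lra.
 - replace T with (m + (T - m))%nat by lia. rewrite rsum_split.
   rewrite (rsum_ext m _ f). rewrite (rsum_ext (T - m) _ (fun _ => 0)).
   assert (rsum (T - m) (fun _ : nat => 0) = 0). { clear. induction (T - m)%nat; simpl; auto. rewrite IHn; ring. } lra.
   intros i Hi. destruct (Nat.ltb_spec (m + i) m); [lia|auto].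
   intros i Hi. destruct (Nat.ltb_spec i m); [auto|lia]. Qed.

Lemma exp_INR x n : exp (x * INR n) = exp x ^ n.
Proof. induction n. simpl. rewrite Rmult_0_r. apply exp_0. rewrite S_INR. simpl.
 rewrite Rmult_plus_distr_l, Rmult_1_r, exp_plus, IHn. ring. Qed.

Lemma div_bound x N eps : 0 < N -> - (eps * N) < x < eps * N -> Rdist (x / N) 0 < eps.
Proof. intros HN [H1 H2]. unfold Rdist. rewrite Rminus_0_r. apply Rabs_def1.
 - apply (Rmult_lt_reg_r N); auto. unfold Rdiv. rewrite Rmult_assoc, Rinv_l, Rmult_1_r; lra.
 - apply (Rmult_lt_reg_r N); auto. unfold Rdiv. rewrite Rmult_assoc, Rinv_l, Rmult_1_r; lra. Qed.

Lemma mu_pow_mono N n0 : (N <= n0)%nat -> mu ^ n0 <= mu ^ N.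
Proof. intros H. replace n0 with (N + (n0 - N))%nat by lia. rewrite pow_add.
 pose proof (pow_le mu N (Rlt_le _ _ mu_pos)).
 assert (mu ^ (n0 - N) <= 1). { replace 1 with (1 ^ (n0 - N)) by apply pow1. apply pow_incr. split; [left; apply mu_pos| apply mu_le1]. }
 nra. Qed.

Definition Sp M := rsum M (fun j => z (S j)).

Lemma Sp_nonneg M : 0 <= Sp M.
Proof. apply rsum_nonneg. intros; left; apply z_pos. Qed.

Lemma Sp_key M T : kap 1%nat + Psi T * Sp M <= Sp (S (M + T)).
Proof. unfold Sp. rewrite rsum_first. replace (z 1%nat) with (kap 1%nat) by (rewrite (Hrec 0); simpl; ring).
 apply Rplus_le_compat_l.
 set (G := fun n i => if (i <? S n)%nat then psi (S i) * z (S n - i)%nat else 0).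
 assert (H1 : rsum (M + T) (fun n => rsum T (fun i => G n i)) <= rsum (M + T) (fun n => z (S (S n)))).
 { apply rsum_le. intros n _. eapply Rle_trans; [apply (rsum_trunc (fun i => psi (S i) * z (S n - i)%nat))|].
   intros i; apply Rmult_le_pos; left; [apply Hpsi; lia|apply z_pos].
   apply z_trunc. lia. }
 rewrite rsum_exch in H1. eapply Rle_trans; [|exact H1].
 unfold Psi. rewrite Rmult_comm, <- rsum_scal. apply rsum_le. intros i Hi.
 replace (M + T)%nat with (i + (M + T - i))%nat by lia. rewrite rsum_split.
 assert (0 <= rsum i (fun n => G n i)).
 { apply rsum_nonneg. intros n _. unfold G. destruct (_ <? _)%nat; [|lra]. apply Rmult_le_pos; left; [apply Hpsi; lia|apply z_pos]. }
 rewrite (rsum_ext _ (fun k => G (i + k)%nat i) (fun k => psi (S i) * z (S k))).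
 2: { intros k _. unfold G. destruct (Nat.ltb_spec i (S (i + k))); [|lia]. f_equal. f_equal. lia. }
 rewrite rsum_scal.
 assert (rsum M (fun j => z (S j)) <= rsum (M + T - i) (fun j => z (S j))) by (apply rsum_mono; [lia| intros; left; apply z_pos]).
 pose proof (Hpsi (S i) ltac:(lia)). nra. Qed.

Section Crit.
Hypothesis Hsum1 : infinite_sum (fun n => psi (S n)) 1.

Lemma Psi_le1 T : Psi T <= 1.
Proof. destruct T. unfold Psi; simpl; lra. unfold Psi. rewrite rsum_sum_f. apply sum_f_nonneg_le; auto.
 intros; left; apply Hpsi; lia. Qed.

Lemma Psi_close eps : 0 < eps -> exists T, 1 - eps < Psi T.
Proof. intros He. destruct (Hsum1 eps He) as [N HN]. exists (S N). unfold Psi. rewrite rsum_sum_f.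
 specialize (HN N (le_n _)). unfold Rdist in HN. apply Rabs_def2 in HN. lra. Qed.

Lemma z_upper n : z (S n) <= Rmax 1 (kap 1%nat).
Proof. set (C := Rmax 1 (kap 1%nat)). assert (HC : 1 <= C) by apply Rmax_l.
 induction n as [n IH] using lt_wf_ind. rewrite Hrec.
 assert (Hs : rsum n (fun i => psi (S i) * z (n - i)%nat) <= C * Psi n).
 { unfold Psi. rewrite <- rsum_scal. apply rsum_le. intros i Hi. replace (n - i)%nat with (S (n - S i)) by lia.
   pose proof (IH (n - S i)%nat ltac:(lia)). pose proof (Hpsi (S i) ltac:(lia)). nra. }
 destruct n as [|m].
 - simpl in Hs. pose proof (Rmax_r 1 (kap 1%nat)). fold C in H. simpl. lra.
 - rewrite Hk2 by lia. pose proof (Psi_le1 (S (S m))). unfold Psi in H.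
   assert (E : rsum (S (S m)) (fun i => psi (S i)) = rsum (S m) (fun i => psi (S i)) + psi (S (S m))) by reflexivity.
   rewrite E in H. unfold Psi in Hs. pose proof (Hpsi (S (S m)) ltac:(lia)).
   assert (psi (S (S m)) <= C * psi (S (S m))) by nra.
   assert (C * (rsum (S m) (fun i => psi (S i)) + psi (S (S m))) <= C) by nra.
   nra. Qed.

Lemma nodecay delta : 0 < delta -> exists n0, (1 <= n0)%nat /\ exp (- delta * INR n0) <= yy n0.
Proof. intros Hd. apply NNPP. intros Hn.
 assert (H : forall n0, (1 <= n0)%nat -> yy n0 < exp (- delta * INR n0)).
 { intros n0 H1. apply Rnot_le_lt. intros H2. apply Hn. exists n0; auto. }
 set (q := exp (- delta)).
 assert (Hq : 0 < q < 1). { split. apply exp_pos. unfold q. rewrite <- exp_0. apply exp_increasing. lra. }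
 set (B := (1 / cc) * (1 / (1 - q))). pose proof cc_pos.
 assert (HB : forall M, Sp M <= B).
 { intros M. assert (G : (1 - q) * rsum M (fun j => q ^ S j) = q - q ^ S M).
   { induction M. simpl; ring. change (rsum (S M) ?f) with (rsum M f + f M). cbv beta. rewrite Rmult_plus_distr_l, IHM. simpl; ring. }
   assert (G2 : rsum M (fun j => q ^ S j) <= 1 / (1 - q)).
   { apply (Rmult_le_reg_l (1 - q)). lra. rewrite G. field_simplify; [|lra]. pose proof (pow_lt q (S M) ltac:(lra)). lra. }
   unfold Sp, B. apply Rle_trans with (1 / cc * rsum M (fun j => q ^ S j)).
   2: { apply Rmult_le_compat_l; [left; apply Rdiv_lt_0_compat; lra | exact G2]. }
   rewrite <- rsum_scal. apply rsum_le. intros j _. pose proof (H (S j) ltac:(lia)). unfold yy in H1.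
   rewrite Rmult_comm, exp_INR in H1. fold q in H1.
   apply (Rmult_le_reg_l cc); auto. field_simplify; lra. }
 assert (Hk1p : 0 < kap 1%nat) by (apply kap_pos; lia).
 assert (HBp : 0 < B) by (pose proof (HB O); pose proof (Sp_nonneg O); unfold B; apply Rmult_lt_0_compat; apply Rdiv_lt_0_compat; lra).
 destruct (Psi_close (kap 1%nat / (2 * B))) as [T HT]. apply Rdiv_lt_0_compat; lra.
 assert (Hind : forall k, INR k * (kap 1%nat / 2) <= Sp (k * (S T))).
 { induction k. simpl. rewrite Rmult_0_l. apply Sp_nonneg.
   replace (S k * S T)%nat with (S (k * S T + T)) by lia.
   pose proof (Sp_key (k * S T) T). pose proof (HB (k * S T)%nat). pose proof (Sp_nonneg (k * S T)).
   assert ((1 - kap 1%nat / (2 * B)) * Sp (k * S T) <= Psi T * Sp (k * S T)) by (apply Rmult_le_compat_r; lra).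
   assert (kap 1%nat / (2 * B) * Sp (k * S T) <= kap 1%nat / (2 * B) * B).
   { apply Rmult_le_compat_l; auto. left; apply Rdiv_lt_0_compat; lra. }
   replace (kap 1%nat / (2 * B) * B) with (kap 1%nat / 2) in H5 by (field; lra).
   rewrite S_INR. lra. }
 destruct (INR_unbounded (2 * B / kap 1%nat)) as [k Hk].
 pose proof (Hind k). pose proof (HB (k * S T)%nat).
 assert (INR k * (kap 1%nat / 2) > B).
 { apply Rgt_lt in Hk. apply (Rmult_lt_compat_r (kap 1%nat / 2)) in Hk; [|lra].
   replace (2 * B / kap 1%nat * (kap 1%nat / 2)) with B in Hk by (field; lra). lra. }
 lra. Qed.

Lemma crit_cv : Un_cv (fun n => ln (z (S n)) / INR (S n)) 0.
Proof. intros eps He.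
 destruct (nodecay (eps / 2)) as [n0 [Hn0 Hy]]. lra.
 destruct (lower (- (eps / 2)) n0 Hn0 Hy) as [L HL].
 set (C := Rmax 1 (kap 1%nat)). assert (HC : 1 <= C) by apply Rmax_l.
 assert (HlnC : 0 <= ln C). { rewrite <- ln_1. apply ln_le'; lra. }
 destruct (INR_unbounded (2 * (Rabs L + ln C) / eps)) as [N0 HN0].
 exists N0. intros n Hn. apply div_bound. apply lt_0_INR; lia.
 assert (INR N0 <= INR (S n)) by (apply le_INR; lia).
 assert (Hbig : 2 * (Rabs L + ln C) < eps * INR (S n)).
 { apply Rgt_lt in HN0. apply (Rmult_lt_compat_r eps) in HN0; auto.
   replace (2 * (Rabs L + ln C) / eps * eps) with (2 * (Rabs L + ln C)) in HN0 by (field; lra). nra. }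
 pose proof (HL (S n) ltac:(lia)). pose proof (Rabs_pos L). pose proof (Rle_abs (- L)). rewrite Rabs_Ropp in H2.
 assert (ln (z (S n)) <= ln C) by (apply ln_le'; [apply z_pos|apply z_upper]).
 assert (0 < INR (S n)) by (apply lt_0_INR; lia).
 split; nra. Qed.
End Crit.

Section Super.
Variable p : R.
Hypothesis Hp : 1 < p.
Hypothesis Hsump : infinite_sum (fun n => psi (S n)) p.

Lemma super_not_cv : ~ Un_cv (fun n => ln (z (S n)) / INR (S n)) 0.
Proof. intros Hcv.
 destruct (Hsump (p - 1)) as [N HN]. lra. specialize (HN N (le_n _)). unfold Rdist in HN. apply Rabs_def2 in HN.
 set (T := S N). assert (HT : 1 < Psi T) by (unfold Psi, T; rewrite rsum_sum_f; lra).
 set (q := Psi T). assert (Hq1 : 1 < q) by (unfold q; lra). pose proof cc_pos. pose proof mu_pos.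
 set (m0 := mu ^ T / cc). assert (Hm0 : 0 < m0) by (unfold m0; apply Rdiv_lt_0_compat; auto; apply pow_lt; auto).
 assert (Hlow : forall n, (T <= n)%nat -> forall m, (forall i, (i < T)%nat -> m <= z (n - i)%nat) -> q * m <= z (S n)).
 { intros n Hn m Hm. eapply Rle_trans; [|apply (z_trunc n T Hn)]. unfold q, Psi. rewrite Rmult_comm, <- rsum_scal.
   apply rsum_le. intros i Hi. rewrite Rmult_comm. apply Rmult_le_compat_l. left; apply Hpsi; lia. auto. }
 assert (Hbase : forall N, (1 <= N)%nat -> m0 <= z N).
 { intros N0. induction N0 as [N0 IH] using lt_wf_ind. intros H1.
   destruct (le_lt_dec N0 T).
   - pose proof (ypow N0 H1). pose proof (mu_pow_mono N0 T l). unfold yy in H2. unfold m0.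
     apply (Rmult_le_reg_l cc); auto. field_simplify; lra.
   - destruct N0 as [|n]; [lia|]. eapply Rle_trans; [|apply (Hlow n ltac:(lia) m0)].
     rewrite <- (Rmult_1_l m0) at 1. apply Rmult_le_compat_r. lra. unfold q; lra. intros i Hi. apply IH; lia. }
 assert (Hstep : forall k N, (1 <= N)%nat -> m0 * q ^ k <= z (N + k * T)%nat).
 { induction k; intros N0 H1. simpl. rewrite Rmult_1_r, Nat.add_0_r. auto.
   replace (N0 + S k * T)%nat with (S (N0 + S k * T - 1)) by (simpl; lia).
   eapply Rle_trans; [|apply (Hlow (N0 + S k * T - 1)%nat ltac:(simpl; lia) (m0 * q ^ k))].
   simpl. lra. intros i Hi. replace (N0 + S k * T - 1 - i)%nat with ((N0 + T - 1 - i) + k * T)%nat by (simpl; lia).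
   apply IHk. lia. }
 destruct (Pow_x_infinity q) with (b := 2 / (m0 * cc)) as [k Hk]. rewrite Rabs_pos_eq; lra.
 specialize (Hk k (le_n _)). rewrite Rabs_pos_eq in Hk by (apply pow_le; lra).
 set (n0 := (1 + k * T)%nat). assert (Hn0 : (1 <= n0)%nat) by (unfold n0; lia).
 assert (Hy : 2 <= yy n0).
 { unfold yy, n0. pose proof (Hstep k 1%nat (le_n _)).
   assert (2 <= m0 * cc * q ^ k).
   { apply Rge_le in Hk. apply (Rmult_le_compat_l (m0 * cc)) in Hk. 
     replace (m0 * cc * (2 / (m0 * cc))) with 2 in Hk by (field; lra). lra. left; apply Rmult_lt_0_compat; auto. }
   nra. }
 pose proof (yy_pos n0).
 set (s := ln (yy n0) / INR n0).
 assert (HINR : 0 < INR n0) by (apply lt_0_INR; lia).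
 assert (Hs : 0 < s). { unfold s. apply Rdiv_lt_0_compat; auto. rewrite <- ln_1. apply ln_increasing; lra. }
 assert (Hes : exp (s * INR n0) <= yy n0). { unfold s. replace (ln (yy n0) / INR n0 * INR n0) with (ln (yy n0)) by (field; lra). rewrite exp_ln; lra. }
 destruct (lower s n0 Hn0 Hes) as [L HL].
 destruct (Hcv (s / 2)) as [N1 HN1]. lra.
 destruct (INR_unbounded (2 * Rabs L / s)) as [N2 HN2].
 set (n := (N1 + N2)%nat). specialize (HN1 n ltac:(unfold n; lia)).
 pose proof (HL (S n) ltac:(lia)).
 assert (0 < INR (S n)) by (apply lt_0_INR; lia).
 assert (INR N2 <= INR (S n)) by (apply le_INR; unfold n; lia).
 assert (Hbig : 2 * Rabs L < s * INR (S n)).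
 { apply Rgt_lt in HN2. apply (Rmult_lt_compat_r s) in HN2; auto.
   replace (2 * Rabs L / s * s) with (2 * Rabs L) in HN2 by (field; lra). nra. }
 pose proof (Rle_abs (- L)). rewrite Rabs_Ropp in H5.
 unfold Rdist in HN1. rewrite Rminus_0_r in HN1. apply Rabs_def2 in HN1. destruct HN1 as [HN1 _].
 assert (ln (z (S n)) < s / 2 * INR (S n)).
 { apply (Rmult_lt_compat_r (INR (S n))) in HN1; auto. unfold Rdiv in HN1 at 1.
   rewrite Rmult_assoc, Rinv_l, Rmult_1_r in HN1; lra. }
 nra. Qed.
End Super.
End Ana.

Section Final.
Variables (K : nat -> R) (a0 a1 beta : R).
Hypothesis HKpos : forall n : nat, (1 <= n)%nat -> 0 < K n.
Hypothesis HKprob : infinite_sum (fun n => K (S n)) 1.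

Lemma K1_bd : 0 < K 1%nat <= 1.
Proof. split. apply HKpos; lia. pose proof (sum_f_nonneg_le (fun n => K (S n)) 1) as H.
 specialize (H ltac:(intros; left; apply HKpos; lia) HKprob O). simpl in H. exact H. Qed.

Lemma psi_sum h : infinite_sum (fun n => psi K a0 a1 beta h (S n)) (exp h * lam K a0 a1 beta).
Proof. unfold infinite_sum.
 change (Un_cv (sum_f_R0 (fun n => psi K a0 a1 beta h (S n))) (exp h * lam K a0 a1 beta)).
 apply cv_ext with (u := fun n => (exp h * c0 a0 beta * c1 a1 beta) * sum_f_R0 (fun n => K (S n)) n
      + exp h * K 1%nat * (c01 a0 a1 beta - c0 a0 beta * c1 a1 beta)).
 { intros n. induction n. simpl. unfold psi. simpl. ring.
   simpl. rewrite <- IHn. unfold psi. simpl. ring. }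
 replace (exp h * lam K a0 a1 beta) with ((exp h * c0 a0 beta * c1 a1 beta) * 1
      + exp h * K 1%nat * (c01 a0 a1 beta - c0 a0 beta * c1 a1 beta)) by (unfold lam; ring).
 apply cv_affine. exact HKprob. Qed.

Section H.
Variable h : R.
Let z := EZ K a0 a1 beta h.
Let r := c0 a0 beta * c1 a1 beta / c01 a0 a1 beta.
Lemma Hpsi' t : (1 <= t)%nat -> 0 < psi K a0 a1 beta h t.
Proof. intros Ht. unfold psi. pose proof (c0_pos a0 beta); pose proof (c1_pos a1 beta); pose proof (c01_pos a0 a1 beta).
 apply Rmult_lt_0_compat. apply Rmult_lt_0_compat. apply exp_pos. apply HKpos; auto.
 destruct (Nat.eqb t 1); auto. apply Rmult_lt_0_compat; auto. Qed.
Lemma Hr' : 0 < r.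
Proof. unfold r. pose proof (c0_pos a0 beta); pose proof (c1_pos a1 beta); pose proof (c01_pos a0 a1 beta).
 apply Rdiv_lt_0_compat; auto. apply Rmult_lt_0_compat; auto. Qed.
Lemma Hk1' : kap K a0 a1 beta h 1%nat = r * psi K a0 a1 beta h 1%nat.
Proof. unfold kap, psi, r. simpl. pose proof (c01_pos a0 a1 beta). field. lra. Qed.
Lemma Hk2' t : (2 <= t)%nat -> kap K a0 a1 beta h t = psi K a0 a1 beta h t.
Proof. intros Ht. unfold kap, psi. destruct t as [|[|t]]; [lia|lia|]. simpl. ring. Qed.
Lemma Hz0' : 0 < z O. Proof. unfold z. rewrite EZ_0. lra. Qed.
End H.

Lemma hca : is_hca K a0 a1 beta (- ln (lambda_formula K a0 a1 beta)).
Proof. rewrite (lam_formula K a0 a1 beta). pose proof (lam_pos K a0 a1 beta K1_bd) as Hl.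
 split.
 - intros h Hh. unfold annealed_fe_zero in Hh. apply Rnot_lt_le. intros Hgt.
   apply (super_not_cv (EZ K a0 a1 beta h) (psi K a0 a1 beta h) (kap K a0 a1 beta h)
     (c0 a0 beta * c1 a1 beta / c01 a0 a1 beta) (Hpsi' h) (Hr') (Hk1' h) (Hk2' h) (Hz0' h) (EZ_rec K a0 a1 beta h)
     (exp h * lam K a0 a1 beta)); auto.
   + apply exp_increasing in Hgt. rewrite exp_Ropp, exp_ln in Hgt by auto.
     apply (Rmult_lt_compat_r (lam K a0 a1 beta)) in Hgt; auto. rewrite Rinv_l in Hgt; lra.
   + apply psi_sum.
 - intros b Hb. apply Hb. unfold annealed_fe_zero.
   set (h := - ln (lam K a0 a1 beta)).
   apply (crit_cv (EZ K a0 a1 beta h) (psi K a0 a1 beta h) (kap K a0 a1 beta h)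
     (c0 a0 beta * c1 a1 beta / c01 a0 a1 beta) (Hpsi' h) (Hr') (Hk1' h) (Hk2' h) (Hz0' h) (EZ_rec K a0 a1 beta h)).
   replace 1 with (exp h * lam K a0 a1 beta). apply psi_sum.
   unfold h. rewrite exp_Ropp, exp_ln by auto. field. lra. Qed.

Theorem main_aux :
  (exists A : mat, is_A0 K a0 a1 beta A) /\
  (forall A : mat, is_A0 K a0 a1 beta A ->
     PF_eigenvalue A (lambda_formula K a0 a1 beta)) /\
  is_hca K a0 a1 beta (- ln (lambda_formula K a0 a1 beta)).
Proof. split; [|split].
 - exists (Aform K a0 a1 beta). apply A_exists; auto.
 - intros A HA. assert (E : A = Aform K a0 a1 beta).
   { apply functional_extensionality; intros x; apply functional_extensionality; intros y. apply (A_unique K a0 a1 beta); auto. }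
   subst A. rewrite (lam_formula K a0 a1 beta). apply PF_Aform. apply K1_bd.
 - apply hca. Qed.
End Final.

Theorem mainTheorem2 (K : nat -> R) (a0 a1 beta : R)
  (HKpos : forall n : nat, (1 <= n)%nat -> 0 < K n)
  (HKprob : infinite_sum (fun n => K (S n)) 1) :
  (exists A : mat, is_A0 K a0 a1 beta A) /\
  (forall A : mat, is_A0 K a0 a1 beta A ->
     PF_eigenvalue A (lambda_formula K a0 a1 beta)) /\
  is_hca K a0 a1 beta (- ln (lambda_formula K a0 a1 beta)).
Proof. exact (main_aux K a0 a1 beta HKpos HKprob). Qed.
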